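(* Let $L_1,\ldots,L_r$ be real linear forms in $n$ variables, $L_i(\mathbf x)=\sum_{j\le n}\lambda_{i,j}x_j$, such that for every $\boldsymbol\alpha\in\mathbb{R}^r\setminus\{\mathbf0\}$ the form $\boldsymbol\alpha\cdot\mathbf L$ does not have all coefficients rational. Let $\Lambda$ be the $n\times r$ matrix with $(j,i)$ entry $\lambda_{i,j}$. For $\boldsymbol\alpha\in\mathbb{R}^r$ and $P\ge1$ let \[ \mathcal F(\boldsymbol\alpha;P)=\sup_{q\in\mathbb N,\ \mathbf a\in\mathbb{Z}^n}\ \prod_{v\le n}\big(q+P|q\lambda_v-a_v|\big)^{-1},\qquad\text{where }\boldsymbol\lambda=\Lambda\boldsymbol\alpha . \] Then for any $0<V\le W$, \[ \sup_{V\le|\Lambda\boldsymbol\alpha|\le W}\mathcal F(\boldsymbol\alpha;P)\to0\qquad(P\to\infty). \]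
   Context: $|\mathbf y|=\max_i|y_i|$ for vectors. *)

(* Defs.v *)
(* Stdlib Reals. Vectors in R^k are functions nat -> R, only indices < k matter. *)
From Stdlib Require Import Reals ZArith.
Open Scope R_scope.

Fixpoint sumR (k : nat) (f : nat -> R) : R :=
  match k with O => 0 | S k' => sumR k' f + f k' end.

Fixpoint prodR (k : nat) (f : nat -> R) : R :=
  match k with O => 1 | S k' => prodR k' f * f k' end.

Fixpoint supnorm (k : nat) (y : nat -> R) : R :=
  match k with O => 0 | S k' => Rmax (supnorm k' y) (Rabs (y k')) end.

Definition is_rational (x : R) : Prop :=
  exists p d : Z, d <> 0%Z /\ x = IZR p / IZR d.

(* lam i j = lambda_{i,j}, i < r, j < n.  (Lambda alpha)_j = sum_{i<r} lambda_{i,j} alpha_i,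
   which is also the j-th coefficient of the form alpha . L. *)
Definition LamMul (r : nat) (lam : nat -> nat -> R) (alpha : nat -> R) : nat -> R :=
  fun j => sumR r (fun i => lam i j * alpha i).

Definition Fterm (n r : nat) (lam : nat -> nat -> R) (alpha : nat -> R) (P : R)
  (q : nat) (a : nat -> Z) : R :=
  prodR n (fun v => / (INR q + P * Rabs (INR q * LamMul r lam alpha v - IZR (a v)))).

(* "F(alpha;P) <= c", i.e. c bounds the supremum over q in N (q >= 1) and a in Z^n *)
Definition F_le (n r : nat) (lam : nat -> nat -> R) (alpha : nat -> R) (P c : R) : Prop :=
  forall (q : nat) (a : nat -> Z), (1 <= q)%nat -> Fterm n r lam alpha P q a <= c.

(* Main.v *)
Require Import Defs.
From Stdlib Require Import Reals ZArith Lra Lia Classical ClassicalEpsilon.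
Open Scope R_scope.

Lemma choice_nat {A : Type} (P : nat -> A -> Prop) :
  (forall k, exists a, P k a) -> exists f : nat -> A, forall k, P k (f k).
Proof.
  intros H. exists (fun k => proj1_sig (constructive_indefinite_description _ (H k))).
  intro k. exact (proj2_sig (constructive_indefinite_description _ (H k))).
Qed.

Lemma sub_cv (u : nat -> R) l (phi : nat -> nat) :
  Un_cv u l -> (forall k, (k <= phi k)%nat) -> Un_cv (fun k => u (phi k)) l.
Proof.
  intros H Hp e He. destruct (H e He) as [N HN]. exists N. intros k Hk.
  apply HN. specialize (Hp k). lia.
Qed.

Lemma const_cv c : Un_cv (fun _ => c) c.
Proof. intros e He. exists 0%nat. intros. unfold Rdist. rewrite Rminus_diag, Rabs_R0. lra. Qed.

Lemma inv_small : forall e, 0 < e -> exists N : nat, forall k, (N <= k)%nat -> / (INR k + 1) < e.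
Proof.
  intros e He. destruct (archimed_cor1 e He) as [N [HN HN0]]. exists N. intros k Hk.
  apply Rle_lt_trans with (/ INR N); auto.
  apply Rinv_le_contravar. apply lt_0_INR; lia.
  apply le_INR in Hk. lra.
Qed.

Lemma abs_inv x M : Rabs x <= M -> -M <= x <= M.
Proof. intro H. pose proof (Rle_abs x). pose proof (Rle_abs (-x)). rewrite Rabs_Ropp in *. lra. Qed.

Lemma abs_inv_lt x M : Rabs x < M -> -M < x < M.
Proof. intro H. pose proof (Rle_abs x). pose proof (Rle_abs (-x)). rewrite Rabs_Ropp in *. lra. Qed.

Lemma bounded_subseq (t : nat -> R) M : (forall k, Rabs (t k) <= M) ->
  exists phi : nat -> nat, (forall k, (k <= phi k)%nat) /\ exists l, Un_cv (fun k => t (phi k)) l.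
Proof.
  intros HM.
  destruct (Bolzano_Weierstrass t (fun c => -M <= c <= M) (compact_P3 (-M) M)) as [l Hl].
  { intro k. specialize (HM k). apply abs_inv in HM. lra. }
  assert (Hc : forall k, exists p, (k <= p)%nat /\ Rabs (t p - l) < / (INR k + 1)).
  { intro k. assert (Hd : 0 < / (INR k + 1)).
    { apply Rinv_0_lt_compat. pose proof (pos_INR k). lra. }
    destruct (Hl (disc l (mkposreal _ Hd)) k) as [p [Hp1 Hp2]].
    - exists (mkposreal _ Hd). intros x Hx. exact Hx.
    - exists p. split; auto. }
  destruct (choice_nat _ Hc) as [phi Hphi].
  exists phi. split. intro k. apply Hphi.
  exists l. intros e He. destruct (inv_small e He) as [N HN]. exists N. intros k Hk.
  unfold Rdist. destruct (Hphi k) as [_ H2]. specialize (HN k Hk). lra.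
Qed.

Lemma sumR_nonneg k f : (forall i, (i < k)%nat -> 0 <= f i) -> 0 <= sumR k f.
Proof.
  induction k; simpl; intros H. lra.
  assert (0 <= f k) by (apply H; lia). assert (0 <= sumR k f) by (apply IHk; intros; apply H; lia). lra.
Qed.

Lemma sumR_ge_term k f p : (forall i, (i < k)%nat -> 0 <= f i) -> (p < k)%nat -> f p <= sumR k f.
Proof.
  induction k; simpl; intros H Hp. lia.
  destruct (Nat.eq_dec p k) as [->|Hne].
  - assert (0 <= sumR k f) by (apply sumR_nonneg; intros; apply H; lia). lra.
  - assert (f p <= sumR k f) by (apply IHk; [intros; apply H; lia | lia]).
    assert (0 <= f k) by (apply H; lia). lra.
Qed.

Lemma general_subseq (t : nat -> R) :
  exists phi : nat -> nat, (forall k, (k <= phi k)%nat) /\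
    ((exists l, Un_cv (fun k => t (phi k)) l) \/ (forall k, INR k + 1 <= Rabs (t (phi k)))).
Proof.
  destruct (classic (exists M, forall k, Rabs (t k) <= M)) as [[M HM]|HnM].
  - destruct (bounded_subseq t M HM) as [phi [H1 H2]]. exists phi. split; auto.
  - assert (Hc : forall k, exists p, (k <= p)%nat /\ INR k + 1 <= Rabs (t p)).
    { intro k. apply NNPP. intro Hn. apply HnM.
      exists (sumR k (fun i => Rabs (t i)) + INR k + 1). intro p.
      assert (0 <= sumR k (fun i => Rabs (t i))) by (apply sumR_nonneg; intros; apply Rabs_pos).
      destruct (le_lt_dec k p) as [Hkp|Hkp].
      - destruct (Rle_lt_dec (INR k + 1) (Rabs (t p))) as [Hl|Hl].
        + exfalso. apply Hn. exists p. auto.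
        + lra.
      - pose proof (sumR_ge_term k (fun i => Rabs (t i)) p (fun i _ => Rabs_pos (t i)) Hkp).
        simpl in H0. pose proof (pos_INR k). lra. }
    destruct (choice_nat _ Hc) as [phi Hphi]. exists phi. split.
    + intro k. apply Hphi.
    + right. intro k. apply Hphi.
Qed.

Lemma vec_subseq (m : nat) (u : nat -> nat -> R) M :
  (forall k v, (v < m)%nat -> Rabs (u k v) <= M) ->
  exists phi : nat -> nat, (forall k, (k <= phi k)%nat) /\ exists y : nat -> R,
    forall v, (v < m)%nat -> Un_cv (fun k => u (phi k) v) (y v).
Proof.
  induction m; intros HM.
  - exists (fun k => k). split. intro; lia. exists (fun _ => 0). intros; lia.
  - destruct IHm as [phi [Hphi [y Hy]]]. { intros. apply HM. lia. }
    destruct (bounded_subseq (fun k => u (phi k) m) M) as [psi [Hpsi [l Hl]]].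
    { intro. apply HM. lia. }
    exists (fun k => phi (psi k)). split.
    + intro k. specialize (Hphi (psi k)). specialize (Hpsi k). lia.
    + exists (fun v => if Nat.eq_dec v m then l else y v). intros v Hv.
      destruct (Nat.eq_dec v m) as [->|Hne].
      * exact Hl.
      * apply (sub_cv (fun k => u (phi k) v)). apply Hy. lia. auto.
Qed.

Lemma cv_ext (u w : nat -> R) l : (forall k, u k = w k) -> Un_cv u l -> Un_cv w l.
Proof. intros H Hu e He. destruct (Hu e He) as [N HN]. exists N. intros. rewrite <- H. auto. Qed.

Lemma cv_inv0 (t : nat -> R) : (forall k, INR k + 1 <= Rabs (t k)) -> Un_cv (fun k => / t k) 0.
Proof.
  intros H e He. destruct (inv_small e He) as [N HN]. exists N. intros k Hk.
  unfold Rdist. rewrite Rminus_0_r. specialize (H k). pose proof (pos_INR k).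
  assert (t k <> 0). { intro Z. rewrite Z, Rabs_R0 in H. lra. }
  rewrite Rabs_inv. apply Rle_lt_trans with (/ (INR k + 1)).
  apply Rinv_le_contravar; lra. apply HN; lia.
Qed.

Lemma LamMul_S r lam al j : LamMul (S r) lam al j = LamMul r lam al j + lam r j * al r.
Proof. reflexivity. Qed.

Lemma LamMul_ext r lam a b j : (forall i, (i < r)%nat -> a i = b i) -> LamMul r lam a j = LamMul r lam b j.
Proof.
  induction r; intros H. reflexivity.
  rewrite !LamMul_S, IHr, (H r). reflexivity. lia. intros; apply H; lia.
Qed.

Lemma LamMul_lin r lam a b c d j :
  LamMul r lam (fun i => c * a i + d * b i) j = c * LamMul r lam a j + d * LamMul r lam b j.
Proof.
  induction r. unfold LamMul; simpl; ring.
  rewrite !LamMul_S, IHr. ring.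
Qed.

Lemma LamMul_0 lam al j : LamMul 0 lam al j = 0.
Proof. reflexivity. Qed.

Lemma span_closed n lam : forall r (al : nat -> nat -> R) (y : nat -> R),
  (forall j, (j < n)%nat -> Un_cv (fun k => LamMul r lam (al k) j) (y j)) ->
  exists beta, forall j, (j < n)%nat -> LamMul r lam beta j = y j.
Proof.
  induction r; intros al y Hy.
  - exists (fun _ => 0). intros j Hj. rewrite LamMul_0.
    apply (UL_sequence (fun _ => 0)). apply const_cv. apply (Hy j Hj).
  - destruct (classic (exists g, forall j, (j < n)%nat -> LamMul r lam g j = lam r j)) as [[g Hg]|HnC].
    + destruct (IHr (fun k i => 1 * al k i + al k r * g i) y) as [b Hb].
      { intros j Hj. apply (cv_ext (fun k => LamMul (S r) lam (al k) j)); [|apply Hy; auto].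
        intro k. rewrite LamMul_lin, LamMul_S, Hg by auto. ring. }
      exists (fun i => if Nat.eq_dec i r then 0 else b i). intros j Hj.
      rewrite LamMul_S. destruct (Nat.eq_dec r r) as [_|]; [|congruence].
      rewrite <- (Hb j Hj). rewrite Rmult_0_r, Rplus_0_r. apply LamMul_ext.
      intros i Hi. destruct (Nat.eq_dec i r); [lia|reflexivity].
    + destruct (general_subseq (fun k => al k r)) as [phi [Hphi [[l Hl]|Hinf]]].
      * destruct (IHr (fun k => al (phi k)) (fun j => y j - lam r j * l)) as [b Hb].
        { intros j Hj.
          apply (cv_ext (fun k => LamMul (S r) lam (al (phi k)) j - lam r j * al (phi k) r)).
          { intro k. rewrite LamMul_S. ring. }
          apply CV_minus. apply (sub_cv (fun k => LamMul (S r) lam (al k) j)); auto.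
          apply (CV_mult (fun _ => lam r j)). apply const_cv. exact Hl. }
        exists (fun i => if Nat.eq_dec i r then l else b i). intros j Hj.
        rewrite LamMul_S. destruct (Nat.eq_dec r r) as [_|]; [|congruence].
        rewrite (LamMul_ext r lam _ b). rewrite Hb by auto. ring.
        intros i Hi. destruct (Nat.eq_dec i r); [lia|reflexivity].
      * exfalso. apply HnC.
        destruct (IHr (fun k i => / al (phi k) r * al (phi k) i + 0 * al (phi k) i)
                   (fun j => - lam r j)) as [b Hb].
        { intros j Hj.
          apply (cv_ext (fun k => LamMul (S r) lam (al (phi k)) j * / al (phi k) r - lam r j)).
          { intro k. rewrite LamMul_lin, LamMul_S. field.
            intro Z. specialize (Hinf k). simpl in Hinf. rewrite Z, Rabs_R0 in Hinf.
            pose proof (pos_INR k). lra. }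
          replace (- lam r j) with (y j * 0 - lam r j) by ring.
          apply CV_minus. apply CV_mult.
          apply (sub_cv (fun k => LamMul (S r) lam (al k) j)); auto.
          apply (cv_inv0 (fun k => al (phi k) r)). exact Hinf. apply const_cv. }
        exists (fun i => -1 * b i + 0 * b i). intros j Hj. rewrite LamMul_lin, Hb by auto. ring.
Qed.

Lemma supn_ge n y v : (v < n)%nat -> Rabs (y v) <= supnorm n y.
Proof.
  induction n; intros Hv; simpl. lia.
  destruct (Nat.eq_dec v n) as [->|Hne]. apply Rmax_r.
  eapply Rle_trans; [apply IHn; lia| apply Rmax_l].
Qed.

Lemma supn_lt n y e : 0 < e -> (forall v, (v < n)%nat -> Rabs (y v) < e) -> supnorm n y < e.
Proof.
  induction n; intros He H; simpl. lra.
  apply Rmax_lub_lt. apply IHn; auto. apply H; lia.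
Qed.

Lemma supn_0 y : supnorm 0 y = 0.
Proof. reflexivity. Qed.

Lemma eventually_all (n : nat) (P : nat -> nat -> Prop) :
  (forall v, (v < n)%nat -> exists N, forall k, (N <= k)%nat -> P v k) ->
  exists N, forall k, (N <= k)%nat -> forall v, (v < n)%nat -> P v k.
Proof.
  induction n; intros H.
  - exists 0%nat. intros; lia.
  - destruct IHn as [N1 HN1]. { intros. apply H. lia. }
    destruct (H n) as [N2 HN2]. lia.
    exists (N1 + N2)%nat. intros k Hk v Hv.
    destruct (Nat.eq_dec v n) as [->|Hne]. apply HN2; lia. apply HN1; lia.
Qed.

Lemma int_limit (z : nat -> Z) l : Un_cv (fun k => IZR (z k)) l ->
  exists N, forall k, (N <= k)%nat -> l = IZR (z k).
Proof.
  intros H. destruct (H (/2)) as [N HN]. lra.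
  assert (Hc : forall k, (N <= k)%nat -> z k = z N).
  { intros k Hk. pose proof (HN k Hk) as H1. pose proof (HN N (le_n N)) as H2.
    unfold Rdist in *. apply abs_inv_lt in H1. apply abs_inv_lt in H2.
    assert (IZR (z k - z N) < 1) by (rewrite minus_IZR; lra).
    assert (-1 < IZR (z k - z N)) by (rewrite minus_IZR; lra).
    apply lt_IZR in H0. apply lt_IZR in H3. lia. }
  assert (l = IZR (z N)).
  { apply (UL_sequence (fun k => IZR (z (k + N)%nat))).
    - intros e He. destruct (H e He) as [N' HN']. exists N'. intros k Hk. apply HN'. lia.
    - apply (cv_ext (fun _ => IZR (z N))). intro k. rewrite (Hc (k + N)%nat) by lia. reflexivity. apply const_cv. }
  exists N. intros k Hk. rewrite Hc by auto. auto.
Qed.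

Lemma cv_small (e : nat -> R) : (forall k, Rabs (e k) <= / (INR k + 1)) -> Un_cv e 0.
Proof.
  intros H eps He. destruct (inv_small eps He) as [N HN]. exists N. intros k Hk.
  unfold Rdist. rewrite Rminus_0_r. eapply Rle_lt_trans. apply H. apply HN; lia.
Qed.

Lemma delta_exists (n r : nat) (lam : nat -> nat -> R)
  (Hirr : forall alpha : nat -> R,
      (exists i, (i < r)%nat /\ alpha i <> 0) ->
      ~ (forall j, (j < n)%nat -> is_rational (LamMul r lam alpha j)))
  (V W : R) (HV : 0 < V) (Q : nat) :
  exists d, 0 < d /\ forall alpha, V <= supnorm n (LamMul r lam alpha) <= W ->
    forall q : nat, (1 <= q <= Q)%nat -> forall a : nat -> Z,
      exists v, (v < n)%nat /\ d <= Rabs (INR q * LamMul r lam alpha v - IZR (a v)).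
Proof.
  apply NNPP. intro Hno.
  assert (Hk : forall k, exists t : ((nat -> R) * nat * (nat -> Z)),
    V <= supnorm n (LamMul r lam (fst (fst t))) <= W /\ (1 <= snd (fst t) <= Q)%nat /\
    forall v, (v < n)%nat ->
      Rabs (INR (snd (fst t)) * LamMul r lam (fst (fst t)) v - IZR (snd t v)) < / (INR (S k))).
  { intro k. apply NNPP. intro Hk. apply Hno. exists (/ INR (S k)). split.
    { apply Rinv_0_lt_compat. apply lt_0_INR. lia. }
    intros al Hal q Hq a. apply NNPP. intro Hv. apply Hk. exists (al, q, a). simpl.
    split; auto. split; auto. intros v Hv'. apply Rnot_le_lt. intro Hle. apply Hv. exists v. auto. }
  destruct (choice_nat _ Hk) as [f Hf].
  set (al := fun k => fst (fst (f k))). set (q := fun k => snd (fst (f k))).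
  set (a := fun k => snd (f k)).
  destruct (vec_subseq (S n) (fun k v => if Nat.eq_dec v n then INR (q k) else LamMul r lam (al k) v)
             (W + INR Q)) as [phi [Hphi [y Hy]]].
  { intros k v Hv. destruct (Hf k) as [[H1 H2] [H3 _]].
    destruct (Nat.eq_dec v n) as [->|Hne].
    - rewrite Rabs_right by (apply Rle_ge, pos_INR). destruct H3 as [_ H3]. apply le_INR in H3.
      assert (0 <= W). { destruct n. simpl in H1. lra.
        pose proof (supn_ge (S n) (LamMul r lam (al k)) 0 ltac:(lia)).
        pose proof (Rabs_pos (LamMul r lam (al k) 0)). unfold al in *. lra. }
      unfold q. lra.
    - pose proof (supn_ge n (LamMul r lam (al k)) v ltac:(lia)). pose proof (pos_INR Q).
      unfold al in *. lra. }
  assert (Hyq : Un_cv (fun k => INR (q (phi k))) (y n)).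
  { apply (cv_ext _ _ _ (fun k => match Nat.eq_dec n n as s return
       ((if s then INR (q (phi k)) else LamMul r lam (al (phi k)) n) = INR (q (phi k)))
       with left _ => eq_refl | right H => False_rect _ (H eq_refl) end)).
    apply (Hy n). lia. }
  assert (Hyl : forall v, (v < n)%nat -> Un_cv (fun k => LamMul r lam (al (phi k)) v) (y v)).
  { intros v Hv. apply (cv_ext (fun k => if Nat.eq_dec v n then INR (q (phi k)) else LamMul r lam (al (phi k)) v)).
    intro k. destruct (Nat.eq_dec v n); [lia|reflexivity]. apply Hy. lia. }
  destruct (int_limit (fun k => Z.of_nat (q (phi k))) (y n)) as [N0 HN0].
  { apply (cv_ext (fun k => INR (q (phi k)))). intro k. apply INR_IZR_INZ. exact Hyq. }
  set (q0 := q (phi N0)).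
  assert (Hq0 : y n = INR q0). { rewrite (HN0 N0 (le_n _)). symmetry. apply INR_IZR_INZ. }
  assert (Hq01 : (1 <= q0)%nat). { unfold q0, q. apply (Hf (phi N0)). }
  assert (Hint : forall v, (v < n)%nat -> exists m, y n * y v = IZR m).
  { intros v Hv. destruct (int_limit (fun k => a (phi k) v) (y n * y v)) as [N1 HN1].
    - apply (cv_ext (fun k => INR (q (phi k)) * LamMul r lam (al (phi k)) v -
          (INR (q (phi k)) * LamMul r lam (al (phi k)) v - IZR (a (phi k) v)))).
      intro k; ring.
      replace (y n * y v) with (y n * y v - 0) by ring.
      apply CV_minus. apply CV_mult; auto.
      apply cv_small. intro k. destruct (Hf (phi k)) as [_ [_ H3]].
      specialize (H3 v Hv). apply Rlt_le. eapply Rlt_le_trans. apply H3.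
      apply Rinv_le_contravar. pose proof (pos_INR k); lra.
      rewrite S_INR. apply Rplus_le_compat_r. apply le_INR. apply Hphi.
    - exists (a (phi N1) v). apply HN1. lia. }
  destruct (span_closed n lam r (fun k => al (phi k)) y Hyl) as [b Hb].
  apply (Hirr b).
  - apply NNPP. intro Hnb.
    assert (Hy0 : forall j, (j < n)%nat -> y j = 0).
    { intros j Hj. rewrite <- (Hb j Hj).
      rewrite (LamMul_ext r lam b (fun i => 0 * b i + 0 * b i)).
      rewrite LamMul_lin. ring. intros i Hi. apply NNPP. intro Hbi. apply Hnb. exists i.
      split; auto. intro Z. apply Hbi. rewrite Z. ring. }
    destruct (eventually_all n (fun v k => Rabs (LamMul r lam (al (phi k)) v) < V)) as [N2 HN2].
    { intros v Hv. destruct (Hyl v Hv V HV) as [N HN]. exists N. intros k Hk2.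
      specialize (HN k Hk2). unfold Rdist in HN. rewrite Hy0, Rminus_0_r in HN; auto. }
    pose proof (supn_lt n (LamMul r lam (al (phi N2))) V HV (HN2 N2 (le_n _))).
    destruct (Hf (phi N2)) as [[H1 _] _]. unfold al in H. lra.
  - intros j Hj. destruct (Hint j Hj) as [m Hm]. exists m, (Z.of_nat q0). split.
    + lia.
    + rewrite Hb by auto. rewrite <- INR_IZR_INZ, <- Hq0, <- Hm. field.
      rewrite Hq0. apply not_0_INR. lia.
Qed.

Lemma prod_le1 n f : (forall v, (v < n)%nat -> 0 < f v <= 1) -> 0 <= prodR n f <= 1.
Proof.
  induction n; intros H; simpl. lra.
  destruct IHn as [H1 H2]. intros; apply H; lia. destruct (H n) as [H3 H4]. lia.
  split. apply Rmult_le_pos; lra.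
  replace 1 with (1 * 1) by ring. apply Rmult_le_compat; lra.
Qed.

Lemma prod_le_term n f v : (forall v, (v < n)%nat -> 0 < f v <= 1) -> (v < n)%nat -> prodR n f <= f v.
Proof.
  induction n; intros H Hv; simpl. lia.
  destruct (prod_le1 n f) as [H1 H2]. intros; apply H; lia.
  destruct (H n) as [H3 H4]. lia.
  destruct (Nat.eq_dec v n) as [->|Hne].
  - replace (f n) with (1 * f n) at 2 by ring. apply Rmult_le_compat_r; lra.
  - assert (prodR n f <= f v) by (apply IHn; [intros; apply H; lia | lia]).
    replace (f v) with (f v * 1) by ring. apply Rmult_le_compat; lra.
Qed.

Theorem mainTheorem7 (n r : nat) (lam : nat -> nat -> R)
  (Hirr : forall alpha : nat -> R,
      (exists i, (i < r)%nat /\ alpha i <> 0) ->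
      ~ (forall j, (j < n)%nat -> is_rational (LamMul r lam alpha j)))
  (V W : R) (HV : 0 < V) (HVW : V <= W) :
  forall eps : R, 0 < eps ->
  exists P0 : R, 1 <= P0 /\
    forall P : R, P0 <= P ->
    forall alpha : nat -> R,
      V <= supnorm n (LamMul r lam alpha) <= W ->
      F_le n r lam alpha P eps.
Proof.
  intros eps Heps.
  destruct (archimed_cor1 eps Heps) as [Q [HQ HQ0]].
  destruct (delta_exists n r lam Hirr V W HV Q) as [d [Hd Hdel]].
  exists (Rmax 1 (/ (eps * d))). split. apply Rmax_l.
  intros P HP al Hal q a Hq.
  pose proof (Rmax_l 1 (/ (eps * d))). pose proof (Rmax_r 1 (/ (eps * d))).
  assert (Hn : (0 < n)%nat).
  { destruct n. simpl in Hal. lra. lia. }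
  unfold Fterm.
  set (f := fun v => / (INR q + P * Rabs (INR q * LamMul r lam al v - IZR (a v)))).
  assert (Hq1 : 1 <= INR q) by (apply (le_INR 1); auto).
  assert (Hf : forall v, (v < n)%nat -> 0 < f v <= 1).
  { intros v Hv. unfold f. pose proof (Rabs_pos (INR q * LamMul r lam al v - IZR (a v))).
    assert (0 <= P * Rabs (INR q * LamMul r lam al v - IZR (a v))) by (apply Rmult_le_pos; lra).
    split. apply Rinv_0_lt_compat. lra.
    rewrite <- Rinv_1. apply Rinv_le_contravar; lra. }
  destruct (le_lt_dec q Q) as [HqQ|HqQ].
  - destruct (Hdel al Hal q (conj Hq HqQ) a) as [v [Hv Hdv]].
    eapply Rle_trans. apply (prod_le_term n f v Hf Hv). unfold f.
    assert (HPd : 1 / eps <= P * d).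
    { assert (/ (eps * d) <= P) by lra.
      replace (1 / eps) with (/ (eps * d) * d) by (field; lra).
      apply Rmult_le_compat_r; lra. }
    assert (0 < 1 / eps) by (apply Rdiv_lt_0_compat; lra).
    apply Rle_trans with (/ (1 / eps)).
    + apply Rinv_le_contravar. lra.
      assert (P * d <= P * Rabs (INR q * LamMul r lam al v - IZR (a v))) by (apply Rmult_le_compat_l; lra).
      pose proof (pos_INR q). lra.
    + right. field. lra.
  - eapply Rle_trans. apply (prod_le_term n f 0 Hf Hn). unfold f.
    apply Rlt_le. apply Rle_lt_trans with (/ INR Q); auto.
    pose proof (Rabs_pos (INR q * LamMul r lam al 0 - IZR (a 0%nat))).
    assert (0 <= P * Rabs (INR q * LamMul r lam al 0 - IZR (a 0%nat))) by (apply Rmult_le_pos; lra).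
    apply Rinv_le_contravar. apply lt_0_INR; lia.
    apply lt_INR in HqQ. lra.
Qed.
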